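(* For $n\geq 1$, let $E_n(p,q)=\sum_{\sigma\in\mathcal{Q}_n}p^{\operatorname{odd}(\sigma)}q^{\operatorname{even}(\sigma)}$. Then \[ E_n(p,q)=\sum_{k=0}^n {n\brack k}\,p^k(p+q)^{n-k}. \] In particular, for $n\geq 2$: $E_n(1,1)=(2n-1)!!$, $E_n(p,0)=n!\,p^n$, $E_n(1,-1)=1$ and $E_n(-1,1)=(-1)^n$.
   Context: Let $[n]_2$ be the multiset $\{1,1,2,2,\dots,n,n\}$. A Stirling permutation of order $n$ is a permutation $\sigma=\sigma_1\cdots\sigma_{2n}$ of $[n]_2$ such that for each $i\in[n]$ every entry between the two occurrences of $i$ is greater than $i$; $\mathcal{Q}_n$ is the set of these. A value $k\in[n]$ is an even (resp. odd) indexed entry of $\sigma$ if the first occurrence of $k$ in $\sigma$ is at an even (resp. odd) position; $\operatorname{even}(\sigma)$ and $\operatorname{odd}(\sigma)$ are the numbers of even and odd indexed entries (so $\operatorname{even}(\sigma)+\operatorname{odd}(\sigma)=n$). ${n\brack k}$ denotes the signless Stirling number of the first kind, the number of permutations of $[n]$ with exactly $k$ cycles. *)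

(* Defs.v *)
From HB Require Import structures.
From mathcomp Require Import all_boot all_order all_algebra all_fingroup.
Set Implicit Arguments. Unset Strict Implicit. Unset Printing Implicit Defensive.
Import GRing.Theory.

Definition multiset2 (n : nat) : seq nat := flatten [seq [:: i; i] | i <- iota 1 n].

(* Stirling condition: for each value i, every entry strictly between the two
   occurrences of i is greater than i. *)
Definition stirling_cond (s : seq nat) : bool :=
  all (fun a => all (fun b => all (fun c =>
     (a < b < c) && (nth 0 s a == nth 0 s c) ==> (nth 0 s a < nth 0 s b))
   (iota 0 (size s))) (iota 0 (size s))) (iota 0 (size s)).

(* Q_n : the list of Stirling permutations of order n.
   [permutations] lists every permutation of the multiset exactly once. *)
Definition stirling_perms (n : nat) : seq (seq nat) :=
  [seq s <- permutations (multiset2 n) | stirling_cond s].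

(* 1-based position of the first occurrence of k in s. *)
Definition first_pos (k : nat) (s : seq nat) : nat := (index k s).+1.

Definition even_ix (n : nat) (s : seq nat) : nat :=
  count (fun k => ~~ odd (first_pos k s)) (iota 1 n).
Definition odd_ix (n : nat) (s : seq nat) : nat :=
  count (fun k => odd (first_pos k s)) (iota 1 n).

Definition E (R : comNzRingType) (n : nat) (p q : R) : R :=
  \sum_(s <- stirling_perms n) p ^+ odd_ix n s * q ^+ even_ix n s.

(* signless Stirling number of the first kind: number of permutations of
   [n] (here 'I_n) with exactly k cycles (fixed points count as cycles). *)
Definition stirling1 (n k : nat) : nat :=
  #|[set s : 'S_n | #|porbits s| == k]|.

Definition odd_dfact (n : nat) : nat := \prod_(i < n) (2 * i + 1).

(* Main.v *)
Require Import Defs.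
From mathcomp Require Import all_boot all_order all_algebra all_fingroup.
From mathcomp Require Import zify ring.
Import GRing.Theory.
Set Implicit Arguments. Unset Strict Implicit. Unset Printing Implicit Defensive.

Module PartA.

Lemma stirling_condP s :
  reflect (forall a b c, a < b -> b < c -> c < size s ->
             nth 0 s a = nth 0 s c -> nth 0 s a < nth 0 s b)
          (stirling_cond s).
Proof.
apply: (iffP idP).
- move=> /allP H a b c ab bc cs e.
  have Ha : a \in iota 0 (size s) by rewrite mem_iota; lia.
  have Hb : b \in iota 0 (size s) by rewrite mem_iota; lia.
  have Hc : c \in iota 0 (size s) by rewrite mem_iota; lia.
  have /allP H2 := H a Ha; have /allP H3 := H2 b Hb.
  have /implyP := H3 c Hc; apply.
  by rewrite ab bc e eqxx.
- move=> H; apply/allP=> a; rewrite mem_iota => Ha; apply/allP => b.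
  rewrite mem_iota => Hb; apply/allP => c; rewrite mem_iota => Hc.
  apply/implyP => /andP[/andP[ab bc] /eqP e]; apply: (H a b c) => //.
Qed.

Section Ins.
Variables (a b : seq nat) (m : nat).
Hypothesis ma : m \notin a.
Hypothesis mb : m \notin b.
Hypothesis lt_m : forall x, x \in a ++ b -> x < m.

Let s := a ++ m :: m :: b.
Let t := a ++ b.
Let f i := if i < size a then i else i.+2.

Lemma nth_f i : nth 0 s (f i) = nth 0 t i.
Proof.
rewrite /f /s /t; case: ltnP => h; rewrite !nth_cat ?h //.
rewrite ltnNge (leqW (leqW h)) /= ltnNge h /=.
by have -> : i.+2 - size a = (i - size a).+2 by lia.
Qed.

Lemma nth_A : nth 0 s (size a) = m.
Proof. by rewrite /s nth_cat ltnn subnn. Qed.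
Lemma nth_A1 : nth 0 s (size a).+1 = m.
Proof. by rewrite /s nth_cat ifN ?subSn ?subnn //; lia. Qed.

Lemma f_mono i j : (f i < f j) = (i < j).
Proof. rewrite /f; case: (ltnP i (size a)); case: (ltnP j (size a)) => ? ? /=; lia. Qed.

Lemma size_st : size s = (size t).+2.
Proof. by rewrite /s /t !size_cat /=; lia. Qed.

Lemma decomp i : i < size s ->
  i = size a \/ i = (size a).+1 \/ exists2 j, j < size t & i = f j.
Proof.
rewrite size_st /f => h.
case: (ltngtP i (size a)) => [lt|gt|->]; last by left.
- by right; right; exists i => //; [rewrite /t size_cat; lia | rewrite lt].
- case: (eqVneq i (size a).+1) => [->|ne]; first by right; left.
  right; right; exists (i - 2); first lia.
  rewrite ifN; lia.
Qed.

Lemma nth_t_lt j : j < size t -> nth 0 t j < m.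
Proof. by move=> h; apply: lt_m; rewrite mem_nth. Qed.

Lemma stirling_ins : stirling_cond s = stirling_cond t.
Proof.
apply/stirling_condP/stirling_condP => H.
- move=> i j k ij jk kt e; rewrite -!nth_f; apply: (H (f i) (f j) (f k)); rewrite ?f_mono //.
  + rewrite size_st /f; case: ifP; lia.
  + by rewrite !nth_f.
- move=> i j k ij jk ks e.
  have ts := size_st.
  have [ei|[ei|[i' i't ei]]] := decomp (ltn_trans ij (ltn_trans jk ks)); subst i.
  + have [ek|[ek|[k' k't ek]]] := decomp ks; subst k; try lia.
    by move: e; rewrite nth_A nth_f => e; have := nth_t_lt k't; rewrite -e ltnn.
  + have [ek|[ek|[k' k't ek]]] := decomp ks; subst k; try lia.
    by move: e; rewrite nth_A1 nth_f => e; have := nth_t_lt k't; rewrite -e ltnn.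
  + have [ek|[ek|[k' k't ek]]] := decomp ks; subst k.
    * by move: e; rewrite nth_A nth_f => e; have := nth_t_lt i't; rewrite e ltnn.
    * by move: e; rewrite nth_A1 nth_f => e; have := nth_t_lt i't; rewrite e ltnn.
    * have [ej|[ej|[j' j't ej]]] := decomp (ltn_trans jk ks); subst j.
      -- by rewrite nth_A nth_f nth_t_lt.
      -- by rewrite nth_A1 nth_f nth_t_lt.
      -- rewrite !nth_f; rewrite !f_mono in ij jk.
         apply: (H i' j' k') => //; by rewrite -!nth_f.
Qed.

Lemma index_ins k : k != m -> odd (index k s) = odd (index k t).
Proof.
move=> km; rewrite /s /t !index_cat; case: ifP => // _.
have mk : (m == k) = false by rewrite eq_sym; apply/negbTE.
by rewrite /= mk !addnS /= negbK.
Qed.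

Lemma index_m : index m s = size a.
Proof. by rewrite /s index_cat (negbTE ma) /= eqxx addn0. Qed.

End Ins.

Lemma multiset2S n : multiset2 n.+1 = multiset2 n ++ [:: n.+1; n.+1].
Proof.
by rewrite /multiset2 -[n.+1]addn1 iotaD map_cat flatten_cat /= addn1.
Qed.

Lemma size_multiset2 n : size (multiset2 n) = n.*2.
Proof. by elim: n => // n IH; rewrite multiset2S size_cat IH /= doubleS; lia. Qed.

Lemma mem_multiset2 n x : (x \in multiset2 n) = (0 < x <= n).
Proof.
elim: n => [|n IH]; first by rewrite /multiset2 /= in_nil; case: x.
rewrite multiset2S mem_cat IH !inE.
case: (eqVneq x n.+1) => [->|ne] /=; first by rewrite orbT ltnSn.
rewrite orbF; move/eqP: ne => ne; lia.
Qed.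

Lemma notin_take_index (x : nat) s : x \notin take (index x s) s.
Proof.
elim: s => //= y s IH; case: (eqVneq y x) => //= ne.
by rewrite in_cons negb_or IH andbT eq_sym.
Qed.

Definition ins n (t : seq nat) A := take A t ++ n.+1 :: n.+1 :: drop A t.

Lemma Q_mem n s : (s \in stirling_perms n) = perm_eq s (multiset2 n) && stirling_cond s.
Proof. by rewrite /stirling_perms mem_filter mem_permutations andbC. Qed.

Lemma Q_elem n t x : t \in stirling_perms n -> x \in t -> 0 < x <= n.
Proof.
by rewrite Q_mem => /andP[/perm_mem pe _]; rewrite pe mem_multiset2.
Qed.

Lemma Q_size n t : t \in stirling_perms n -> size t = n.*2.
Proof. by rewrite Q_mem => /andP[/perm_size -> _]; rewrite size_multiset2. Qed.

Lemma Q_notin n t : t \in stirling_perms n -> n.+1 \notin t.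
Proof. by move=> tQ; apply/negP => /(Q_elem tQ); rewrite ltnn andbF. Qed.

Lemma ins_mem n t A : t \in stirling_perms n -> ins n t A \in stirling_perms n.+1.
Proof.
move=> tQ; have nt := Q_notin tQ.
have ma : n.+1 \notin take A t by apply: contra nt => /mem_take.
have mb : n.+1 \notin drop A t by apply: contra nt => /mem_drop.
rewrite Q_mem /ins stirling_ins ?cat_take_drop //; last first.
  by move=> x /(Q_elem tQ) /andP[_]; rewrite ltnS.
move: (tQ); rewrite Q_mem => /andP[pt ->]; rewrite andbT multiset2S.
apply: perm_trans (_ : perm_eq _ (t ++ [:: n.+1; n.+1])) _; last by rewrite perm_cat2r.
rewrite -[t in perm_eq _ (t ++ _)](cat_take_drop A t) -catA perm_cat2l.
by rewrite -cat1s -[_ :: drop _ _]cat1s catA perm_catC.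
Qed.

Lemma Q_decomp n s : s \in stirling_perms n.+1 ->
  exists2 t, t \in stirling_perms n & exists2 A, A <= n.*2 & s = ins n t A.
Proof.
move=> sQ; move: (sQ); rewrite Q_mem => /andP[ps sc].
have elt x : x \in s -> 0 < x <= n.+1 := Q_elem sQ.
have cm : count_mem n.+1 s = 2.
  rewrite (seq.permP ps) multiset2S count_cat /= eqxx.
  have /count_memPn -> : n.+1 \notin multiset2 n by rewrite mem_multiset2 ltnn andbF.
  by [].
have ms : n.+1 \in s by apply: contraT => /count_memPn; rewrite cm.
have [a [r [es [sa ma]]]] : exists a r, s = a ++ n.+1 :: r /\ size a = index n.+1 s
     /\ n.+1 \notin a.
  have As : index n.+1 s < size s by rewrite index_mem.
  exists (take (index n.+1 s) s), (drop (index n.+1 s).+1 s).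
  split; last split; last exact: notin_take_index.
  - by rewrite -{1}(cat_take_drop (index n.+1 s) s) (drop_nth 0 As) nth_index.
  - by rewrite size_takel // ltnW.
have cr : count_mem n.+1 r = 1.
  by move: cm; rewrite es count_cat /= eqxx (count_memPn ma); lia.
have mr : n.+1 \in r by apply: contraT => /count_memPn; rewrite cr.
have [b eb] : exists b, r = n.+1 :: b.
  case: r es cr mr => [|y b] //= es cr mr.
  case: (eqVneq y n.+1) => [->|ne]; first by exists b.
  exfalso.
  have Br : index n.+1 b < size b by rewrite index_mem; move: mr; rewrite in_cons eq_sym (negbTE ne).
  have mb : n.+1 \in b by move: mr; rewrite in_cons eq_sym (negbTE ne).
  have nthc i : size a <= i -> nth 0 s i = nth 0 [:: n.+1, y & b] (i - size a).
    by move=> h; rewrite es nth_cat ifF //; apply/negbTE; rewrite -leqNgt.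
  have n1 : nth 0 s (size a) = n.+1 by rewrite nthc // subnn.
  have n2 : nth 0 s (size a).+1 = y by rewrite nthc // subSnn.
  have n3 : nth 0 s ((size a).+2 + index n.+1 b) = n.+1.
    have h : size a <= (size a).+2 + index n.+1 b by lia.
    rewrite nthc //.
    by rewrite (_ : (size a).+2 + index n.+1 b - size a = (index n.+1 b).+2) /= ?nth_index //; lia.
  have sz : size s = (size a + size b).+2 by rewrite es size_cat /=; lia.
  move/stirling_condP: sc => /(_ (size a) (size a).+1 ((size a).+2 + index n.+1 b)).
  have h2 : (size a).+1 < (size a).+2 + index n.+1 b by lia.
  have h3 : (size a).+2 + index n.+1 b < size s by lia.
  rewrite n1 n2 n3 => /(_ (ltnSn _) h2 h3 erefl).
  have : y \in s by rewrite es mem_cat !inE eqxx !orbT.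
  move=> /elt /andP[_ yl] lt; lia.
subst r.
have mb : n.+1 \notin b.
  by apply/count_memPn; move: cr => /= ; rewrite eqxx; case.
have ltm x : x \in a ++ b -> x < n.+1.
  move=> xab; have xs : x \in s by move: xab; rewrite es !mem_cat !in_cons => /orP[->|->]; rewrite ?orbT.
  have /andP[_ xl] := elt x xs; rewrite ltn_neqAle xl andbT.
  by apply: contraNneq (_ : n.+1 \notin a ++ b) => [<-|]; rewrite // mem_cat negb_or ma mb.
have tQ : a ++ b \in stirling_perms n.
  rewrite Q_mem -(stirling_ins ma mb ltm) -es sc andbT.
  rewrite -(perm_cat2r [:: n.+1; n.+1]) -multiset2S.
  apply: perm_trans ps; rewrite es perm_sym -catA perm_cat2l.
  by rewrite -cat1s -[_ :: b]cat1s catA perm_catC.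
exists (a ++ b) => //; exists (size a).
  by rewrite -(Q_size tQ) size_cat leq_addr.
by rewrite /ins take_size_cat // drop_size_cat.
Qed.

Lemma filter_ins n t A : n.+1 \notin t -> filter (predC1 n.+1) (ins n t A) = t.
Proof.
move=> nt; rewrite /ins filter_cat /= eqxx /= -filter_cat cat_take_drop.
apply/all_filterP/allP => x xt /=; apply: contraNneq nt => <- //.
Qed.

Lemma index_ins' n t A : n.+1 \notin t -> A <= size t -> index n.+1 (ins n t A) = A.
Proof.
move=> nt At; rewrite /ins index_cat ifN; last by apply: contra nt => /mem_take.
by rewrite /= eqxx addn0 size_takel.
Qed.

Lemma Q_perm n : perm_eq (stirling_perms n.+1)
  [seq ins n t A | t <- stirling_perms n, A <- iota 0 (n.*2).+1].
Proof.
apply: uniq_perm.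
- exact: filter_uniq (permutations_uniq _).
- apply: allpairs_uniq; [exact: filter_uniq (permutations_uniq _) | exact: iota_uniq |].
  move=> [t1 A1] [t2 A2] m1 m2 /= e.
  case/allpairsP: m1 => [[t1' A1'] /= [h1 h2 e1]].
  case/allpairsP: m2 => [[t2' A2'] /= [h3 h4 e2]].
  case: e1 e => -> -> ; case: e2 => -> -> e.
  have e1 : t1' = t2' by rewrite -(filter_ins A1' (Q_notin h1)) e filter_ins // Q_notin.
  subst t2'; congr pair.
  rewrite -(index_ins' (Q_notin h1) (_ : A1' <= size t1')) ?e ?index_ins' //.
  + exact: Q_notin.
  + by move: h4; rewrite in_cons mem_iota (Q_size h3); lia.
  + by move: h2; rewrite in_cons mem_iota (Q_size h1); lia.
- move=> s; apply/idP/allpairsP.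
  + move=> /Q_decomp [t tQ [A Al ->]]; exists (t, A); split => //.
    by rewrite mem_iota /=; lia.
  + by move=> [[t A] /= [tQ _ ->]]; apply: ins_mem.
Qed.

Lemma odd_ix_ins n t A : t \in stirling_perms n -> A <= size t ->
  odd_ix n.+1 (ins n t A) = odd_ix n t + ~~ odd A /\
  even_ix n.+1 (ins n t A) = even_ix n t + odd A.
Proof.
move=> tQ At; have nt := Q_notin tQ.
have key k : k \in iota 1 n -> odd (first_pos k (ins n t A)) = odd (first_pos k t).
  rewrite mem_iota => kl; rewrite /first_pos /= /ins.
  rewrite -[t in RHS](cat_take_drop A t) index_ins //.
  by apply/eqP => e; subst; lia.
rewrite /odd_ix /even_ix -[n.+1]addn1 iotaD !count_cat /= add1n !addn0.
rewrite /first_pos index_ins' //= negbK; split; congr (_ + _); apply: eq_in_count => k /key //=.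
by move=> ->.
Qed.

Local Open Scope ring_scope.

Lemma sum_alt (R : comNzRingType) (p q : R) n :
  \sum_(A <- iota 0 (n.*2).+1) (if odd A then q else p) = p + n%:R * (p + q).
Proof.
elim: n => [|n IH]; first by rewrite /= big_seq1 mul0r addr0.
rewrite doubleS -(addn2 (n.*2).+1) iotaD big_cat IH /= add0n big_cons big_seq1 /=.
rewrite odd_double /= -[n.+1]addn1 natrD; ring.
Qed.

Lemma E0 (R : comNzRingType) (p q : R) : E 0 p q = 1.
Proof. by rewrite /E /stirling_perms /= big_seq1 /odd_ix /even_ix /= !expr0 mulr1. Qed.

Lemma ES (R : comNzRingType) (p q : R) n : E n.+1 p q = E n p q * (p + n%:R * (p + q)).
Proof.
rewrite /E (perm_big _ (Q_perm n)) /= (big_allpairs_dep (h := fun t A => ins n t A) (r1 := stirling_perms n) (r2 := fun _ => iota 0 (n.*2).+1)) big_distrl.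
apply: eq_big_seq => t tQ.
rewrite (eq_big_seq (fun A => (p ^+ odd_ix n t * q ^+ even_ix n t) * (if odd A then q else p))).
  by rewrite -big_distrr /= sum_alt.
move=> A; rewrite mem_iota => /andP[_ h].
have hA : (A <= size t)%N by rewrite (Q_size tQ); lia.
have [-> ->] := odd_ix_ins tQ hA.
by case: (odd A); rewrite /= ?addn0 ?addn1 !exprS; ring.
Qed.

Lemma E_prod (R : comNzRingType) (p q : R) n :
  E n p q = \prod_(i < n) (p + i%:R * (p + q)).
Proof. by elim: n => [|n IH]; rewrite ?E0 ?big_ord0 // ES IH big_ord_recr. Qed.
End PartA.
Module PartB.

Section LiftP.
Variable n : nat.
Local Open Scope group_scope.
Definition Lp (u : 'S_n) : 'S_n.+1 := lift_perm ord0 ord0 u.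

Lemma Lp_X (u : 'S_n) i k : ((Lp u) ^+ i) (lift ord0 k) = lift ord0 ((u ^+ i) k).
Proof.
elim: i => [|i IH]; first by rewrite !expg0 !perm1.
by rewrite !expgSr !permM IH /Lp lift_perm_lift.
Qed.

Lemma Lp_X0 (u : 'S_n) i : ((Lp u) ^+ i) ord0 = ord0.
Proof. by apply: permX_fix; rewrite /Lp lift_perm_id. Qed.

Lemma porbit_L0 (u : 'S_n) : porbit (Lp u) ord0 = [set ord0].
Proof.
apply/setP => y; rewrite inE; apply/porbitP/eqP => [[i ->]|->]; first exact: Lp_X0.
by exists 0%N; rewrite expg0 perm1.
Qed.

Lemma porbit_Llift (u : 'S_n) k : porbit (Lp u) (lift ord0 k) = lift ord0 @: porbit u k.
Proof.
apply/setP => y; apply/porbitP/imsetP => [[i ->]|[z /porbitP [i ->] ->]].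
  by exists ((u ^+ i) k); [exact: mem_porbit | exact: Lp_X].
by exists i; rewrite Lp_X.
Qed.

Lemma card_porbits_L (u : 'S_n) : #|porbits (Lp u)| = #|porbits u|.+1.
Proof.
have -> : porbits (Lp u) = [set ord0] |: [set (@lift n.+1 ord0) @: A | A : {set 'I_n} in porbits u].
  apply/setP => A; rewrite !inE; apply/imsetP/orP.
  - case => x _ ->; case: (unliftP ord0 x) => [k|] ->.
      right; apply/imsetP; exists (porbit u k); last exact: porbit_Llift.
      by apply: imset_f.
    by left; rewrite porbit_L0.
  - case => [/eqP ->|/imsetP [B /imsetP [k _ ->] ->]].
      by exists ord0 => //; rewrite porbit_L0.
    by exists (lift ord0 k) => //; rewrite porbit_Llift.
rewrite cardsU1 card_imset; last exact: imset_inj (@lift_inj _ ord0).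
suff -> : [set ord0] \notin [set (@lift n.+1 ord0) @: A | A : {set 'I_n} in porbits u] by [].
apply/imsetP => [[B /imsetP[k _ ->] e]].
have : lift ord0 k \in [set ord0 : 'I_n.+1] by rewrite e; apply: imset_f; exact: porbit_id.
by rewrite inE eq_sym (negbTE (neq_lift _ _)).
Qed.

Lemma card_porbits_f (u : 'S_n) j :
  #|porbits (tperm j ord0 * Lp u)| = if j == ord0 then #|porbits u|.+1 else #|porbits u|.
Proof.
case: eqVneq => [->|ne]; first by rewrite tperm1 mul1g card_porbits_L.
have := porbits_mul_tperm (Lp u) j ord0.
rewrite porbit_L0 inE ne card_porbits_L /= -addnn.
move: #|porbits (tperm j ord0 * Lp u)| #|porbits u| => a b; lia.
Qed.

Lemma porbits_le (u : 'S_n) : (#|porbits u| <= n)%N.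
Proof. by rewrite /porbits (leq_trans (leq_imset_card _ _)) // card_ord. Qed.

Lemma f_inj : injective (fun p : 'S_n * 'I_n.+1 => tperm p.2 ord0 * Lp p.1).
Proof.
move=> [u1 j1] [u2 j2] /= e.
have h : Lp u2 (tperm j2 ord0 j1) = ord0.
  by rewrite -permM -e permM tpermL /Lp lift_perm_id.
have ej : j1 = j2.
  case: (unliftP ord0 (tperm j2 ord0 j1)) h => [k ->|e0 _].
    by rewrite /Lp lift_perm_lift => h; have := neq_lift ord0 (u2 k); rewrite h eqxx.
  by rewrite -(tpermK j2 ord0 j1) e0 tpermR.
subst j2; have e2 := mulgI _ _ _ e.
have -> : u1 = u2; last by [].
apply/permP => k; apply: (@lift_inj _ ord0).
by rewrite -!(@lift_perm_lift _ ord0 ord0) -/(Lp u1) -/(Lp u2) e2.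
Qed.

Lemma f_bij : bijective (fun p : 'S_n * 'I_n.+1 => tperm p.2 ord0 * Lp p.1).
Proof.
apply: inj_card_bij; first exact: f_inj.
by rewrite card_prod !card_Sn card_ord factS mulnC.
Qed.
End LiftP.

Local Open Scope ring_scope.

Definition W (R : comNzRingType) n (x y : R) :=
  \sum_(s : 'S_n) x ^+ #|porbits s| * y ^+ (n - #|porbits s|).

Lemma WS (R : comNzRingType) n (x y : R) : W n.+1 x y = W n x y * (x + n%:R * y).
Proof.
rewrite /W (reindex _ (onW_bij _ (f_bij n))) /=.
rewrite -(pair_bigA _ (fun (u : 'S_n) (j : 'I_n.+1) => x ^+ #|porbits (tperm j ord0 * Lp u)| *
     y ^+ (n.+1 - #|porbits (tperm j ord0 * Lp u)|))) /= big_distrl /=.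
apply: eq_bigr => u _; rewrite big_ord_recl /= card_porbits_f eqxx.
have cl := porbits_le u.
rewrite (eq_bigr (fun _ => y * (x ^+ #|porbits u| * y ^+ (n - #|porbits u|)))); last first.
  by move=> i _; rewrite card_porbits_f eq_sym (negbTE (neq_lift _ _)) subSn // exprS mulrCA.
rewrite big_const_ord iter_addr_0 subSS exprS -(mulr_natl (y * _) n).
move: (x ^+ _) (y ^+ _) => X Y; ring.
Qed.

Lemma W_prod (R : comNzRingType) n (x y : R) : W n x y = \prod_(i < n) (x + i%:R * y).
Proof.
elim: n => [|n IH]; last by rewrite WS IH big_ord_recr.
rewrite /W big_ord0 (bigD1 (1%g : 'S_0)) //= big1 => [|s]; last by rewrite permS0 eqxx.
rewrite (_ : #|porbits (1%g : 'S_0)| = 0%N) ?expr0 ?mulr1 ?addr0 //.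
by apply/eqP; rewrite -leqn0 porbits_le.
Qed.

Lemma stirling_sum (R : comNzRingType) n (x y : R) :
  \sum_(0 <= k < n.+1) (stirling1 n k)%:R * x ^+ k * y ^+ (n - k) = W n x y.
Proof.
rewrite big_mkord /W.
pose c (s : 'S_n) : 'I_n.+1 := Ordinal (porbits_le s : (#|porbits s| < n.+1)%N).
rewrite (partition_big c xpredT) //=.
apply: eq_bigr => k _.
rewrite (eq_bigr (fun _ => x ^+ k * y ^+ (n - k))); last by move=> s /eqP <-.
rewrite (eq_bigl (fun s => s \in [set s : 'S_n | #|porbits s| == k])); last first.
  by move=> s; rewrite inE -val_eqE.
by rewrite sumr_const /stirling1 -mulrA mulr_natl.
Qed.
End PartB.
Import PartA PartB.
Local Open Scope ring_scope.

Lemma prod_const (R : comNzRingType) n (c : R) : \prod_(i < n) c = c ^+ n.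
Proof. by elim: n => [|n IH]; rewrite ?big_ord0 ?expr0 // big_ord_recr IH exprSr. Qed.

Lemma prod_fact (R : comNzRingType) n (p : R) :
  \prod_(i < n) (p + i%:R * (p + 0)) = (n`!)%:R * p ^+ n.
Proof.
elim: n => [|n IH]; first by rewrite big_ord0 fact0 expr0 mulr1.
rewrite big_ord_recr IH factS natrM exprSr /= addr0 -[n.+1]addn1 natrD.
move: (n`!%:R : R) (n%:R : R) (p ^+ n) => A B C; ring.
Qed.

Lemma prod_dfact (R : comNzRingType) n :
  \prod_(i < n) (1 + i%:R * (1 + 1)) = (odd_dfact n)%:R :> R.
Proof.
rewrite /odd_dfact natr_prod; apply: eq_bigr => i _.
rewrite natrD natrM; move: (i%:R : R) => I; rewrite (_ : 2%:R = 1 + 1 :> R) //; ring.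
Qed.

Theorem theorem4 :
  (forall (R : comNzRingType) (n : nat) (p q : R), (1 <= n)%N ->
     E n p q = \sum_(0 <= k < n.+1) (stirling1 n k)%:R * p ^+ k * (p + q) ^+ (n - k))
  /\
  (forall (R : comNzRingType) (n : nat), (2 <= n)%N ->
     [/\ E n (1 : R) 1 = (odd_dfact n)%:R,
         forall p : R, E n p 0 = (n`!)%:R * p ^+ n,
         E n (1 : R) (-1) = 1
       & E n (-1 : R) 1 = (-1) ^+ n]).
Proof.
split.
- by move=> R n p q _; rewrite E_prod stirling_sum W_prod.
- move=> R n _; split.
  + by rewrite E_prod prod_dfact.
  + by move=> p; rewrite E_prod prod_fact.
  + rewrite E_prod (eq_bigr (fun _ => 1)) ?prod_const ?expr1n // => i _.
    by rewrite addrN mulr0 addr0.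
  + rewrite E_prod (eq_bigr (fun _ => -1)) ?prod_const // => i _.
    by rewrite addNr mulr0 addr0.
Qed.
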